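(* Let $\mathscr C$ be a class of graphs with sub-exponential expansion. Then for every integer $p\ge 2$ there exists an integer $g_p$ such that every graph $G\in\mathscr C$ with $\mathrm{girth}(G)\ge g_p$ is $p$-path degenerate.
   Context: Graphs are finite and simple; the girth of a graph is the length of a shortest cycle ($+\infty$ for a forest). A strict ear of a graph $G$ is a path of $G$ whose internal vertices all have degree $2$ in $G$ and whose two endpoints are distinct. For an integer $p\ge1$, a $p$-reduction of $G$ is the deletion of either an isolated vertex, or a vertex of degree $1$, or the internal vertices of a strict ear of $G$ of length at least $p$. A graph is $p$-path degenerate if it can be reduced to the empty graph (no vertices) by a sequence of $p$-reductions. For a half-integer $r\ge0$ ($r\in\frac12\mathbb N$), a graph $H$ is a shallow minor of $G$ at depth $r$ if to every $v\in V(H)$ one can associate a rooted tree $(T_v,r_v)$ such that the $T_v$ are vertex-disjoint subgraphs of $G$, each $T_v$ has radius at most $\lceil r\rceil$ (every path of $T_v$ starting at $r_v$ has length at most $\lceil r\rceil$), and for every edge $uv\in E(H)$ there is an edge $e$ of $G$ between $T_u$ and $T_v$ such that the path between $r_u$ and $r_v$ in $T_u\cup T_v\cup\{e\}$ has length at most $2r+1$. $\nabla_r(G)$ is the maximum of $|E(H)|/|V(H)|$ over nonempty shallow minors $H$ of $G$ at depth $r$. The expansion of a class $\mathscr C$ is $\mathrm{Exp}_{\mathscr C}(r)=\sup\{\nabla_r(G):G\in\mathscr C\}$ for $r\in\frac12\mathbb N$. The class has sub-exponential expansion if $\mathrm{Exp}_{\mathscr C}(r)=2^{o(r)}$ (in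 particular it is finite for every $r$). *)

(* Defs.v *)
From mathcomp Require Import all_boot.
Set Implicit Arguments. Unset Strict Implicit. Unset Printing Implicit Defensive.

Record sgraph := SGraph {
  svert : finType;
  sadj : rel svert;
  sadj_sym : symmetric sadj;
  sadj_irr : irreflexive sadj }.

Definition graph_class := sgraph -> Prop.

Definition nedges (G : sgraph) : nat :=
  #|[set e : {set svert G} |
      [exists x, exists y, sadj x y && (e == [set x; y])]]|.

Definition nverts (G : sgraph) : nat := #|svert G|.

Definition is_cycle (G : sgraph) (x0 : svert G) (t : seq (svert G)) : bool :=
  [&& uniq (x0 :: t), 3 <= size (x0 :: t), path (@sadj G) x0 t
    & sadj (last x0 t) x0].

Definition girth_ge (G : sgraph) (g : nat) : Prop :=
  forall (x0 : svert G) (t : seq (svert G)), is_cycle x0 t -> g <= size (x0 :: t).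

(** ** p-path degeneracy.
    We work with the induced subgraph G[V] for V : {set svert G}. *)
Definition deg_in (G : sgraph) (V : {set svert G}) (x : svert G) : nat :=
  #|[set y in V | sadj x y]|.

Definition interior (T : Type) (x0 : T) (t : seq T) : seq T :=
  take (size t).-1 t.

Definition strict_ear (G : sgraph) (V : {set svert G}) (x0 : svert G)
  (t : seq (svert G)) : bool :=
  [&& uniq (x0 :: t), t != [::], all (fun x => x \in V) (x0 :: t),
      path (@sadj G) x0 t
    & all (fun x => deg_in V x == 2) (interior x0 t)].

Inductive p_reduction (p : nat) (G : sgraph) (V : {set svert G}) :
  {set svert G} -> Prop :=
| red_isolated x : x \in V -> deg_in V x = 0 -> p_reduction p V (V :\ x)
| red_leaf x : x \in V -> deg_in V x = 1 -> p_reduction p V (V :\ x)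
| red_ear x0 t : strict_ear V x0 t -> p <= size t ->
    p_reduction p V (V :\: [set x | x \in interior x0 t]).

Inductive p_reducible (p : nat) (G : sgraph) : {set svert G} -> Prop :=
| pred_empty : p_reducible p (set0 : {set svert G})
| pred_step V W : p_reduction p V W -> p_reducible p W -> p_reducible p V.

Definition p_path_degenerate (p : nat) (G : sgraph) : Prop :=
  p_reducible p [set: svert G].

(** The depth r is a half-integer, encoded by k = 2r : nat; thus
    ceil r = (k+1)./2 and 2r+1 = k+1.
    The rooted trees (T_u, rt u) are encoded by their vertex sets S u, their
    roots rt u and a (global) parent map par: every non-root x of S u has its
    parent par x in S u, adjacent to x in G (tree edges are {x, par x}), and
    iterating par from x reaches the root; the length of the tree path from
    the root to x is the least n with iter n par x = rt u. *)
Definition shallow_minor (k : nat) (G H : sgraph) : Prop :=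
  exists (S : svert H -> {set svert G}) (rt : svert H -> svert G)
         (par : svert G -> svert G),
  [/\ (forall u v, u != v -> [disjoint S u & S v]),
      (forall u, rt u \in S u),
      (forall u x, x \in S u -> x != rt u -> (par x \in S u) && sadj x (par x)),
      (forall u x, x \in S u -> exists2 n, n <= (k.+1)./2 & iter n par x = rt u)
    & (forall u v, sadj u v -> exists x y n m,
         [/\ [&& x \in S u, y \in S v & sadj x y],
             iter n par x = rt u, iter m par y = rt v & n + m + 1 <= k.+1])].

(** Exp_C(k/2) <= b, i.e. |E(H)|/|V(H)| <= b for every nonempty shallow
    minor H at depth k/2 of a graph of C. *)
Definition expansion_le (C : graph_class) (k b : nat) : Prop :=
  forall G H, C G -> shallow_minor k G H -> 0 < nverts H ->
    nedges H <= b * nverts H.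

(** Sub-exponential expansion: Exp_C(r) is finite for all r, and
    Exp_C(r) = 2^{o(r)}, i.e. for every eps = 1/q > 0 there is R such that
    Exp_C(r) <= 2^{r/q} for all r >= R (r = k/2); the inequality
    |E(H)|/|V(H)| <= 2^{k/(2q)} is written |E(H)|^{2q} <= 2^k |V(H)|^{2q}. *)
Definition subexp_expansion (C : graph_class) : Prop :=
  (forall k, exists b, expansion_le C k b) /\
  (forall q, 0 < q -> exists K, forall k, K <= k ->
     forall G H : sgraph, C G -> shallow_minor k G H -> 0 < nverts H ->
       nedges H ^ (2 * q) <= 2 ^ k * nverts H ^ (2 * q)).

(* Main.v *)
Require Import Defs.
From mathcomp Require Import all_boot.
From mathcomp Require Import zify.
From Stdlib Require Import Classical_Prop.
Set Implicit Arguments. Unset Strict Implicit. Unset Printing Implicit Defensive.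

Section Walks.
Variable G : sgraph.
Local Notation T := (svert G).
Local Notation adj := (@sadj G).

Definition eav (a b : T) : rel T := fun u v =>
  adj u v && ~~ ((u == a) && (v == b) || (u == b) && (v == a)).

Lemma cycle_from_walk g a b w : girth_ge G g -> adj a b ->
  path (eav a b) b w -> last b w = a -> g <= (size w).+1.
Proof.
move=> Hg ab pw.
case: (shortenP pw) => p' pp' up' sub lp'.
have nab : a != b by apply/eqP=> E; move: ab; rewrite E (sadj_irr).
have Hc : is_cycle b p'.
  rewrite /is_cycle up' lp' ab /= andbT.
  rewrite (sub_path _ pp') ?andbT; last by move=> u v /andP[].
  move: pp' lp' {up' sub}; case: p' => [|c [|d p'']] //=.
  - by move=> _ E; move: nab; rewrite E eqxx.
  - by rewrite andbT => /andP[_ H] E; move: H; rewrite E !eqxx orbT.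
have := Hg _ _ Hc => /leq_trans; apply.
by rewrite /= ltnS; apply: uniq_leq_size => //; case/andP: up'.
Qed.

Lemma rev_walk (W : {set T}) a w :
  path adj a w -> all (fun x => x \in W) (a :: w) ->
  [/\ path adj (last a w) (rev (belast a w)),
      all (fun x => x \in W) (last a w :: rev (belast a w)),
      last (last a w) (rev (belast a w)) = a &
      size (rev (belast a w)) = size w].
Proof.
move=> pw aw; split.
- move: pw; rewrite rev_path; apply: sub_path => u v /=; by rewrite sadj_sym.
- apply/allP=> x; rewrite -[x \in _ :: _]/(x \in (_ :: _)) -mem_rcons. rewrite mem_rcons in_cons mem_rev -in_cons -mem_rcons -lastI => xin.
  by move/allP: aw; apply.
- by case: w {pw aw} => [|c w] //=; rewrite rev_cons last_rcons.
- by rewrite size_rev size_belast.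
Qed.
Definition walk (W : {set T}) (a : T) (w : seq T) :=
  path adj a w && all (fun x => x \in W) (a :: w).

Fixpoint ball (W : {set T}) (n : nat) (X : {set T}) : {set T} :=
  if n is n'.+1 then ball W n' X :|:
     [set v in W | [exists u in ball W n' X, adj u v]]
  else X :&: W.

Lemma ball_sub W n X : ball W n X \subset W.
Proof.
elim: n => [|n IH] /=; first exact: subsetIr.
by rewrite subUset IH /=; apply/subsetP=> x; rewrite inE => /andP[].
Qed.

Lemma ball_mono W n m X : n <= m -> ball W n X \subset ball W m X.
Proof.
move=> /subnK <-; elim: (m - n) => [|k IH] //=.
by apply: subset_trans IH _; exact: subsetUl.
Qed.

Lemma ballE W n X z : (z \in ball W n X) <->
  (exists a w, [/\ a \in X, walk W a w, last a w = z & size w <= n]).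
Proof.
elim: n z => [|n IH] z /=.
  split; first by rewrite inE => /andP[zX zW]; exists z, [::]; rewrite /walk /= zW.
  case=> a [w [aX wk lw sw]]; case: w wk lw sw => // wk lw _; move: wk; rewrite /walk /= andbT => aW; by rewrite inE -lw aX aW.
split.
  rewrite inE => /orP[/IH [a [w [aX wk lw sw]]]|].
    by exists a, w; split=> //; exact: leqW.
  rewrite inE => /andP[zW /existsP[u /andP[/IH [a [w [aX /andP[pw aw] lw sw]]] uz]]].
  exists a, (rcons w z); split=> //.
  - by rewrite /walk rcons_path pw lw uz -rcons_cons all_rcons zW aw.
  - by rewrite last_rcons.
  - by rewrite size_rcons.
case=> a [w [aX wk lw sw]].
case: (lastP w) wk lw sw => [|w' v] wk lw sw.
  by rewrite inE; apply/orP; left; apply/IH; exists a, [::]; split.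
rewrite size_rcons ltnS in sw.
move: wk; rewrite /walk rcons_path -rcons_cons all_rcons => /andP[/andP[pw uv] /andP[vW aw]].
move: lw; rewrite last_rcons => vz; subst v.
rewrite !inE; apply/orP; right; rewrite vW /=.
apply/existsP; exists (last a w'); rewrite uv andbT; apply/IH.
by exists a, w'; split=> //; rewrite /walk pw aw.
Qed.

Lemma path_eav_avoid a b z u s : (z == a) || (z == b) ->
  path adj u s -> all (fun v => v != z) (u :: s) -> path (eav a b) u s.
Proof.
move=> zab; elim: s u => [|v s IH] u //= /andP[uv ps] /and3P[uz vz As].
apply/andP; split; last by apply: IH => //=; rewrite vz.
rewrite /eav uv /=.
by case/orP: zab => /eqP E; subst z; rewrite (negbTE uz) (negbTE vz) ?andbF.
Qed.

Lemma exists_split (x : T) s : x \in s -> exists s1 s2, s = s1 ++ x :: s2.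
Proof. by case/splitPr=> s1 s2; exists s1, s2. Qed.

Lemma walk_cat W a w1 w2 : walk W a w1 -> walk W (last a w1) w2 ->
  walk W a (w1 ++ w2).
Proof.
rewrite /walk cat_path => /andP[-> A1] /andP[-> A2] /=.
by move: A1 A2; rewrite /= all_cat => /andP[-> ->] /andP[_ ->].

Qed.

Lemma walk_rev W a w : walk W a w ->
  walk W (last a w) (rev (belast a w)) /\ last (last a w) (rev (belast a w)) = a
  /\ size (rev (belast a w)) = size w.
Proof.
move=> /andP[pw aw]; have [h1 h2 h3 h4] := rev_walk pw aw.
by rewrite /walk h1 h2.
Qed.

Lemma walk_sub (W W' : {set T}) a w : W \subset W' -> walk W a w -> walk W' a w.
Proof.
move=> /subsetP sW /andP[pw aw]; apply/andP; split => //; apply/allP=> v vin; apply: sW; move/allP: aw; exact.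
Qed.

End Walks.

Lemma adj_neq (G : sgraph) (u v : svert G) : sadj u v -> u != v.
Proof. by apply: contraTneq => ->; rewrite sadj_irr. Qed.

Lemma walk_avoid (G : sgraph) (V : {set svert G}) z u s :
  walk (V :\ z) u s -> all (fun v => v != z) (u :: s).
Proof.
move=> /andP[_ /allP A]; apply/allP=> v /A; rewrite !inE => /andP[] //.
Qed.

Lemma walk_in (G : sgraph) (V : {set svert G}) z u s :
  walk (V :\ z) u s -> walk V u s.
Proof. by apply: walk_sub; apply: subsetDl. Qed.

Lemma disjP' (T : finType) (A B : {set T}) :
  (forall z, z \in A -> z \in B -> False) -> [disjoint A & B].
Proof.
move=> H; rewrite disjoints_subset; apply/subsetP => z zA; rewrite inE.
by apply/negP => zB; exact: H z zA zB.
Qed.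

Lemma card_pairs (T : finType) (A : {set T}) (f : T -> {set T}) :
  #|[set q : T * T | (q.1 \in A) && (q.2 \in f q.1)]| = \sum_(x in A) #|f x|.
Proof.
rewrite -sum1_card (eq_bigl (fun q : T * T => (q.1 \in A) && (q.2 \in f q.1))); last first.
  by move=> q; rewrite inE.
rewrite -(pair_big_dep (fun x => x \in A) (fun x y => y \in f x) (fun _ _ => 1)).
by apply: eq_bigr => x _; rewrite sum1_card.
Qed.

Lemma oriented_le (H : sgraph) :
  #|[set q : svert H * svert H | sadj q.1 q.2]| <= 2 * nedges H.
Proof.
set OH := [set q : svert H * svert H | sadj q.1 q.2].
pose E := [set e : {set svert H} |
      [exists x, exists y, sadj x y && (e == [set x; y])]].
pose f := fun q : svert H * svert H =>
  ([set q.1; q.2], (enum_rank q.1 < enum_rank q.2)%N).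
have inj : {in OH &, injective f}.
  move=> [a b] [a' b']; rewrite !inE /= => ab ab' [E1 E2].
  have nab : a != b by apply: contraTneq ab => ->; rewrite sadj_irr.
  have aE : a \in [set a'; b'] by rewrite -E1 !inE eqxx.
  have bE : b \in [set a'; b'] by rewrite -E1 !inE eqxx orbT.
  move: aE bE; rewrite !inE => /orP[/eqP ea|/eqP ea] /orP[/eqP eb|/eqP eb]; subst.
  - by rewrite eqxx in nab.
  - by [].
  - move: E2; case: (ltngtP (enum_rank a') (enum_rank b')) => // h.
    by move/val_inj/enum_rank_inj: h => h; rewrite h eqxx in nab.
  - by rewrite eqxx in nab.
have -> : 2 = #|[set: bool]| by rewrite cardsT card_bool.
rewrite -(card_in_imset inj) mulnC /nedges -/E -cardsX.
apply: subset_leq_card; apply/subsetP => _ /imsetP[[a b] hab ->].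
rewrite !inE andbT; apply/existsP; exists a; apply/existsP; exists b.
by rewrite eqxx andbT; move: hab; rewrite inE.
Qed.

Section Core.
Variable G : sgraph.
Local Notation T := (svert G).
Local Notation adj := (@sadj G).
Variables (V : {set T}) (p R : nat).
Hypothesis Hp : 2 <= p.
Hypothesis HpR : p <= R.
Hypothesis Hg : girth_ge G (8 * R + 3).
Hypothesis Hdeg : forall x, x \in V -> 2 <= deg_in V x.
Hypothesis Hear : forall x0 t, strict_ear V x0 t -> size t < p.

Definition F (y x : T) n := ball (V :\ y) n [set x].
Definition Br := [set x in V | 2 < deg_in V x].

Lemma F_disj x x1 x2 n : 2 * n + 2 < 8 * R + 3 -> x1 != x2 ->
  adj x x1 -> adj x x2 -> [disjoint F x x1 n & F x x2 n].
Proof.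
move=> hn n12 a1 a2.
apply/disjP' => z /ballE [a [w [aX wk lw sw]]] /ballE [b [w' [bX wk' lw' sw']]].
move: aX bX; rewrite !inE => /eqP ea /eqP eb; subst a b.
have [wr [lr sr]] := walk_rev wk'.
rewrite lw' in wr lr.
have Wk : walk (V :\ x) x1 (w ++ rev (belast x2 w')) by apply: walk_cat => //; rewrite lw.
have last1 : last x1 (w ++ rev (belast x2 w')) = x2 by rewrite last_cat lw.
have := @cycle_from_walk G _ x x1 (rcons (w ++ rev (belast x2 w')) x) Hg a1.
rewrite rcons_path last_rcons size_rcons size_cat sr.
have /andP[pW _] := Wk.
rewrite (path_eav_avoid (z:=x)) ?eqxx ?(walk_avoid Wk) //=.
rewrite last1 => H.
suff : 8 * R + 3 <= (size w + size w').+2 by lia.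
apply: H => //.
by rewrite /eav sadj_sym a2 [x2 == x1]eq_sym (negbTE n12) (negbTE (adj_neq a1)) !andbF.
Qed.

Lemma F_nest x y x1 n : n + 2 < 8 * R + 3 -> x \in V ->
  adj x y -> adj x x1 -> x1 != y -> F x x1 n \subset F y x n.+1.
Proof.
move=> hn xV axy ax1 x1y.
apply/subsetP => z /ballE [a [w [aX wk lw sw]]]; move: aX; rewrite inE => /eqP ea; subst a.
have yw : y \notin x1 :: w.
  rewrite in_cons eq_sym (negbTE x1y) /=; apply/negP => yin.
  have [w1 [w2 E]] := exists_split yin; subst w.
  have Av := walk_avoid wk.
  have /andP[pw _] := wk.
  move: pw; rewrite cat_path => /andP[pw1 /= /andP[ly _]].
  have P1 : path (eav x x1) x1 (rcons w1 y).
    apply: (path_eav_avoid (z:=x)); rewrite ?eqxx //; first by rewrite rcons_path pw1 ly.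
    apply/allP => v vin; apply: (allP Av).
    by move: vin; rewrite !(in_cons, mem_rcons, mem_cat) => /or3P[] ->; rewrite ?orbT.
  have := @cycle_from_walk G _ x x1 (rcons (rcons w1 y) x) Hg ax1.
  rewrite rcons_path P1 !last_rcons !size_rcons /= => H.
  suff : 8 * R + 3 <= (size w1).+3 by move: sw; rewrite size_cat /=; lia.
  apply: H => //.
  rewrite /eav sadj_sym axy [y == x1]eq_sym (negbTE x1y).
  by rewrite [y == x]eq_sym (negbTE (adj_neq axy)).
apply/ballE; exists x, (x1 :: w); split.
- by rewrite inE.
- have /andP[pw aw] := wk.
  have Aw : all (fun v => v \in V :\ y) (x1 :: w).
    apply/allP => v vin; have := allP aw v vin; rewrite !inE => /andP[_ ->].
    by rewrite andbT; apply: contraNneq yw => <-.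
  by rewrite /walk /= ax1 pw; move: Aw; rewrite /= => ->; rewrite !inE (adj_neq axy) xV.
- by [].
- by [].
Qed.

Lemma chain_ext y0 t x x1 : strict_ear V y0 (rcons t x) -> adj x x1 ->
  x1 != last y0 t -> x1 \notin y0 :: rcons t x.
Proof.
move=> se ax1 x1y.
have st := Hear se; rewrite size_rcons in st.
case/and5P: se => us _ _ ps _.
apply/negP => xin.
have [s1 [s2 E]] := exists_split xin.
have ps' : sorted adj (s1 ++ x1 :: s2) by rewrite -E.
have px : path adj x1 s2 := (cat_sorted2 ps').2.
have ls : last x1 s2 = x.
  by have := congr1 (last y0) E; rewrite /= last_rcons last_cat /= => ->.
have sz : size s2 <= (size t).+1.
  by have := congr1 size E; rewrite /= size_rcons size_cat /=; lia.
move: us; rewrite E cat_uniq => /and3P[_ _ /andP[u2 ux]].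
clear ps' xin; case: s2 px ls u2 ux E sz => [|c s2'] px ls u2 ux E sz.
  by move: (adj_neq ax1); rewrite /= -ls eqxx.
case: (eqVneq c x) => cx.
  subst c; case: s2' px ls u2 ux E sz => [|d s''] px ls u2 ux E sz; last first.
    move: ux; rewrite /= -ls; have := mem_last d s''; rewrite /= => ->.
    by [].  
  have E' : rcons (y0 :: t) x = rcons (rcons s1 x1) x by rewrite rcons_cons E -!cats1 -catA.
  move: (rcons_inj E') => [] E2.
  by move: x1y; rewrite -[last y0 t]/(last y0 (y0 :: t)) E2 last_rcons eqxx.
suff : 8 * R + 3 <= (size (c :: s2')).+1 by move: sz => /= sz H; lia.
apply: (@cycle_from_walk G _ x x1 (c :: s2') Hg ax1) => //=; apply/andP; split.
  move: px => /= /andP[H _]; rewrite /eav H.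
  by rewrite eq_sym (negbTE (adj_neq ax1)) (negbTE cx) /= andbF.
apply: (path_eav_avoid (z:=x1)); rewrite ?eqxx ?orbT //.
  by case/andP: px.
by apply/allP => v vin; apply/eqP => Ev; move: u2; rewrite -Ev vin.
Qed.

Lemma interior_rcons (a b : T) s : interior a (rcons s b) = s.
Proof. by rewrite /interior size_rcons -cats1 take_size_cat. Qed.

Lemma ear1 x x1 : x \in V -> x1 \in V -> adj x x1 -> strict_ear V x (rcons [::] x1).
Proof.
move=> xV x1V ax1; rewrite /strict_ear /= xV x1V ax1 !andbT /=.
by rewrite !inE (adj_neq ax1).
Qed.

Lemma CL n : n <= R -> forall y0 t x, strict_ear V y0 (rcons t x) ->
  2 ^ ((n + size t) %/ p) <= #|Br :&: F (last y0 t) x n| + 1.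
Proof.
elim: n => [|n IH] hn y0 t x se.
  have st := Hear se; rewrite size_rcons in st.
  by rewrite add0n divn_small ?expn0 ?leq_addl //; lia.
have st := Hear se; rewrite size_rcons in st.
have se0 := se.
case/and5P: se => us _ As ps Ai.
have xV : x \in V by apply: (allP As); rewrite -rcons_cons mem_rcons mem_head.
set y := last y0 t.
have yV : y \in V.
  apply: (allP As); have := mem_last y0 t; rewrite -/y !in_cons mem_rcons in_cons.
  by case/orP=> ->; rewrite ?orbT.
have ayx : adj y x by move: ps; rewrite rcons_path => /andP[].
have axy : adj x y by rewrite sadj_sym.
have yN : y \in [set z in V | adj x z] by rewrite inE yV axy.
have Fx : x \in F y x n.+1.
  apply: (subsetP (ball_mono _ _ (leq0n n.+1))); rewrite /= !inE eqxx xV andbT.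
  by rewrite eq_sym (adj_neq ayx).
case: (boolP (2 < deg_in V x)) => dx.
  have : 1 < #|[set z in V | adj x z] :\ y|.
    by move: dx; rewrite /deg_in (cardsD1 y) yN.
  case/card_gt1P => x1 [x2 [h1 h2 n12]].
  move: h1 h2; rewrite !inE => /and3P[x1y x1V ax1] /and3P[x2y x2V ax2].
  have I1 := IH (ltnW hn) x [::] x1 (ear1 xV x1V ax1).
  have I2 := IH (ltnW hn) x [::] x2 (ear1 xV x2V ax2).
  rewrite /= addn0 in I1 I2.
  set A1 := Br :&: F x x1 n in I1; set A2 := Br :&: F x x2 n in I2.
  have sub : x |: (A1 :|: A2) \subset Br :&: F y x n.+1.
    rewrite subUset sub1set inE Fx inE xV dx /=.
    have hn' : n + 2 < 8 * R + 3 by clear -hn; lia.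
    by rewrite subUset; apply/andP; split; apply: setIS; apply: F_nest.
  have xA : x \notin A1 :|: A2.
    rewrite !inE negb_or; apply/andP; split; apply/negP => /andP[_].
      by move/(subsetP (ball_sub _ _ _)); rewrite !inE eqxx.
    by move/(subsetP (ball_sub _ _ _)); rewrite !inE eqxx.
  have dis : #|A1 :&: A2| = 0.
    apply/eqP; rewrite cards_eq0; apply/eqP/setP => z; rewrite in_set0.
    apply/negP => /setIP[/setIP[_ z1] /setIP[_ z2]].
    have hd : 2 * n + 2 < 8 * R + 3 by clear -hn; lia.
    have := F_disj hd n12 ax1 ax2; rewrite disjoints_subset => /subsetP/(_ z z1).
    by rewrite inE z2.
  have := subset_leq_card sub; rewrite cardsU1 xA cardsU dis subn0 /= => C.
  have E1 : 2 ^ ((n.+1 + size t) %/ p) <= 2 * 2 ^ (n %/ p).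
    rewrite -expnS leq_exp2l //.
    rewrite -[X in _ <= X]add1n -(divnMDl 1 n (ltnW Hp)) mul1n.
    by apply: leq_div2r; clear -st; lia.
  by clear -C I1 I2 E1; lia.
have d2 : deg_in V x = 2 by have h2 := Hdeg xV; clear -dx h2; lia.
have : 0 < #|[set z in V | adj x z] :\ y|.
  by move: d2; rewrite /deg_in (cardsD1 y) yN => d2; clear -d2; lia.
case/card_gt0P => x1; rewrite !inE => /and3P[x1y x1V ax1].
have se' : strict_ear V y0 (rcons (rcons t x) x1).
  have nin := chain_ext se0 ax1 x1y.
  apply/and5P; split.
  - by rewrite -rcons_cons rcons_uniq nin us.
  - by rewrite -size_eq0 size_rcons.
  - by rewrite -rcons_cons all_rcons x1V As.
  - by rewrite rcons_path ps last_rcons ax1.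
  - rewrite interior_rcons all_rcons d2 /=.
    by move: Ai; rewrite interior_rcons.
have I1 := IH (ltnW hn) y0 (rcons t x) x1 se'.
rewrite last_rcons size_rcons addnS -addSn in I1.
apply: (leq_trans I1).
rewrite leq_add2r; apply: subset_leq_card; apply: setIS; apply: F_nest => //; clear -hn; lia.
Qed.

Definition valid (D : {set T}) := (D \subset V) &&
  [forall c1 in D, forall c2 in D, (c1 != c2) ==>
     [disjoint ball V R [set c1] & ball V R [set c2]]].

Lemma valid0 : valid set0.
Proof. by rewrite /valid sub0set; apply/forall_inP => c; rewrite inE. Qed.

Definition D := s2val (maxset_exists valid0).
Lemma Dmax : maxset valid D.
Proof. exact: (s2valP (maxset_exists valid0)). Qed.

Lemma DV : D \subset V.
Proof. by have /maxsetp/andP[] := Dmax. Qed.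

Lemma Ddisj c1 c2 : c1 \in D -> c2 \in D -> c1 != c2 ->
  [disjoint ball V R [set c1] & ball V R [set c2]].
Proof.
move=> h1 h2 h12; have /maxsetp/andP[_ /forall_inP/(_ c1 h1)/forall_inP/(_ c2 h2)] := Dmax.
by move/implyP/(_ h12).
Qed.

Lemma walk_join c x z w1 w2 : walk V x w1 -> last x w1 = z ->
  walk V c w2 -> last c w2 = z -> size w1 <= R -> size w2 <= R ->
  exists w, [/\ walk V c w, last c w = x & size w <= 2 * R].
Proof.
move=> k1 l1 k2 l2 s1 s2.
have [kr [lr sr]] := walk_rev k1; rewrite l1 in kr lr.
exists (w2 ++ rev (belast x w1)); split.
- by apply: walk_cat => //; rewrite l2.
- by rewrite last_cat l2.
- by rewrite size_cat sr; clear -s1 s2; lia.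
Qed.

Lemma Dcover x : x \in V -> x \in ball V (2 * R) D.
Proof.
move=> xV.
case: (boolP (x \in D)) => xD.
  by apply: (subsetP (ball_mono _ _ (leq0n _))); rewrite /= inE xD xV.
have nv : ~~ valid (x |: D).
  apply/negP => vx; have := maxsetsup Dmax vx (subsetUr _ _).
  by move/setP/(_ x); rewrite !inE eqxx (negbTE xD).
have xDV : x |: D \subset V by rewrite subUset sub1set xV DV.
move: nv; rewrite /valid xDV /= => /forall_inPn [c1 h1 /forall_inPn [c2 h2]].
rewrite negb_imply => /andP[n12 /pred0Pn [z /andP[z1 z2]]].
have key : forall c, c \in D -> z \in ball V R [set c] -> z \in ball V R [set x] ->
    x \in ball V (2 * R) D.
  move=> c cD /ballE [a [w [aX wk lw sw]]] /ballE [b [w' [bX wk' lw' sw']]].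
  move: aX bX; rewrite !inE => /eqP ea /eqP eb; subst a b.
  have [w0 [k0 l0 s0]] := walk_join wk' lw' wk lw sw' sw.
  by apply/ballE; exists c, w0; split.
move: h1 h2; rewrite !inE => /orP[/eqP e1|d1] /orP[/eqP e2|d2].
- by move: n12; rewrite e1 e2 eqxx.
- by subst c1; apply: (key c2).
- by subst c2; apply: (key c1).
- have := Ddisj d1 d2 n12; rewrite disjoints_subset => /subsetP/(_ z z1).
  rewrite inE => /negP H. exfalso; apply: H. exact: z2.
Qed.

Definition L n := ball V n D.
Definition dd (x : T) := find (fun n => x \in L n) (iota 0 (2 * R).+1).

Lemma dd_V x : x \in V -> dd x <= 2 * R /\ x \in L (dd x).
Proof.
move=> xV.
have hs : has (fun n => x \in L n) (iota 0 (2 * R).+1).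
  apply/hasP; exists (2 * R); last exact: Dcover.
  by rewrite mem_iota add0n ltnSn.
have := hs; rewrite has_find size_iota => hlt.
split; first by rewrite -ltnS.
by have := nth_find 0 hs; rewrite nth_iota.
Qed.

Lemma dd_min x m : x \in L m -> dd x <= m.
Proof.
move=> xm; have xV : x \in V by apply: (subsetP (ball_sub _ _ _) _ xm).
rewrite leqNgt; apply/negP => hm.
have [hd _] := dd_V xV.
have := @before_find _ 0 (fun n => x \in L n) (iota 0 (2 * R).+1) m hm.
by rewrite nth_iota ?xm //; clear -hm hd; lia.
Qed.

Lemma dd0 x : x \in V -> (dd x == 0) = (x \in D).
Proof.
move=> xV; apply/eqP/idP => [h|xD].
  by have [_] := dd_V xV; rewrite h /L /= inE => /andP[].
by apply/eqP; rewrite -leqn0; apply: dd_min; rewrite /L /= inE xD xV.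
Qed.

Definition par (x : T) : T :=
  if dd x is m.+1 then odflt x [pick u | (u \in L m) && adj u x] else x.

Lemma par0 x : dd x = 0 -> par x = x.
Proof. by rewrite /par => ->. Qed.

Lemma par_spec x : x \in V -> 0 < dd x ->
  [/\ par x \in V, adj (par x) x & dd (par x) < dd x].
Proof.
move=> xV; rewrite /par; have [_] := dd_V xV.
case E: (dd x) => [|m] //= xm _.
have nxm : x \notin L m by apply/negP => /dd_min; rewrite E ltnn.
move: xm; rewrite /L /= inE (negbTE nxm) /= inE => /andP[_ /existsP [u /andP[um ux]]].
case: pickP => [v /andP[vm vx]|/(_ u)]; last by rewrite um ux.
split => //; first exact: (subsetP (ball_sub _ _ _) _ vm).
by rewrite ltnS; apply: dd_min.
Qed.

Lemma iter_par x n : x \in V -> iter n par x \in V /\ dd (iter n par x) <= dd x - n.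
Proof.
move=> xV; elim: n => [|n [IV IH]] /=; first by rewrite subn0.
case: (posnP (dd (iter n par x))) => h.
  by rewrite par0 // IV h; split => //.
have [h1 _ h3] := par_spec IV h; split => //; clear -IH h3; lia.
Qed.

Lemma iter_stable x n : x \in V -> dd x <= n -> iter n par x = iter (dd x) par x.
Proof.
move=> xV /subnK <-; rewrite iterD.
have [_] := iter_par (dd x) xV; rewrite subnn leqn0 => /eqP h.
by elim: (n - dd x) => [|k IH] //=; rewrite IH par0.
Qed.

Definition root x := iter (2 * R) par x.

Lemma root_D x : x \in V -> root x \in D.
Proof.
move=> xV; have [hd _] := dd_V xV; rewrite /root iter_stable //.
have [h1 h2] := iter_par (dd x) xV; rewrite subnn leqn0 in h2.
by rewrite -dd0.
Qed.

Lemma root_par x : x \in V -> root (par x) = root x.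
Proof.
move=> xV; have [hd _] := dd_V xV.
by rewrite /root -iterSr iter_stable ?(iter_stable xV hd) //; apply: leqW.
Qed.

Lemma root_fix x : x \in D -> root x = x.
Proof.
move=> xD; have xV := subsetP DV x xD.
rewrite /root iter_stable //; first by move: (xD); rewrite -dd0 // => /eqP ->.
by move: (xD); rewrite -dd0 // => /eqP ->.
Qed.

Definition te (a b : T) := [&& a \in V, 0 < dd a & b == par a].

Lemma te_adj a b : te a b -> adj a b.
Proof. by case/and3P => aV ha /eqP ->; have [_ h _] := par_spec aV ha; rewrite sadj_sym. Qed.

Lemma tree_walk x : x \in V -> exists w,
  [/\ path te x w, last x w = root x & size w <= dd x].
Proof.
move=> xV.
suff H : forall k y, y \in V -> dd y <= k -> exists w,
  [/\ path te y w, last y w = root y & size w <= dd y] by exact: H.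
elim=> [|k IH] x' x'V hk.
  exists [::]; move: hk; rewrite leqn0 => /eqP h.
  by rewrite /= /root iter_stable ?h.
case: (posnP (dd x')) => h.
  by exists [::]; rewrite /= /root iter_stable ?h.
have [h1 h2 h3] := par_spec x'V h.
have hk' : dd (par x') <= k by clear -h3 hk; lia.
have [w [pw lw sw]] := IH (par x') h1 hk'.
exists (par x' :: w); split.
- by rewrite /= pw /te x'V h eqxx.
- by rewrite /= lw root_par.
- by rewrite /=; clear -sw h3; lia.
Qed.

Definition nt (a b : T) := [&& a \in V, b \in V, adj a b, ~~ te a b & ~~ te b a].

Lemma te_eav a b u w : ~~ te a b -> ~~ te b a -> path te u w -> path (eav a b) u w.
Proof.
move=> n1 n2; apply: sub_path => x y txy; rewrite /eav (te_adj txy) /=.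
apply/negP => /orP[] /andP[/eqP e1 /eqP e2]; subst.
  by rewrite txy in n1.
by rewrite txy in n2.
Qed.

Lemma te_eav_rev a b u w : ~~ te a b -> ~~ te b a -> path te u w ->
  path (eav a b) (last u w) (rev (belast u w)).
Proof.
move=> n1 n2; rewrite rev_path; apply: sub_path => x y /= tyx.
rewrite /eav sadj_sym (te_adj tyx) /=.
apply/negP => /orP[] /andP[/eqP e1 /eqP e2]; subst.
  by rewrite tyx in n2.
by rewrite tyx in n1.
Qed.

Lemma last_rev_belast (a : T) w : last (last a w) (rev (belast a w)) = a.
Proof. by case: w => [|c w] //=; rewrite rev_cons last_rcons. Qed.

Lemma nt_root a b : nt a b -> root a != root b.
Proof.
case/and5P => aV bV ab n1 n2; apply/eqP => E.
have [wa [pa la sa]] := tree_walk aV; have [wb [pb lb sb]] := tree_walk bV.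
have [da _] := dd_V aV; have [db _] := dd_V bV.
have := @cycle_from_walk G _ a b (wb ++ rev (belast a wa)) Hg ab.
rewrite cat_path (te_eav n1 n2 pb) lb -E -la (te_eav_rev n1 n2 pa) last_cat lb -E -la.
rewrite last_rev_belast size_cat size_rev size_belast => /(_ isT erefl).
by clear -sa sb da db; lia.
Qed.

Lemma nt_inj x1 y1 x2 y2 : nt x1 y1 -> nt x2 y2 -> root x1 = root x2 ->
  root y1 = root y2 -> (x1, y1) = (x2, y2).
Proof.
move=> h1 h2 ex ey; apply/eqP; apply/negP => /negP ne.
have r1 := nt_root h1.
case/and5P: h1 => x1V y1V a1 n1 n2; case/and5P: h2 => x2V y2V a2 _ _.
have [wx1 [px1 lx1 sx1]] := tree_walk x1V; have [wy1 [py1 ly1 sy1]] := tree_walk y1V.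
have [wx2 [px2 lx2 sx2]] := tree_walk x2V; have [wy2 [py2 ly2 sy2]] := tree_walk y2V.
have [dx1 _] := dd_V x1V; have [dy1 _] := dd_V y1V.
have [dx2 _] := dd_V x2V; have [dy2 _] := dd_V y2V.
set w := wy1 ++ rev (belast y2 wy2) ++ x2 :: wx2 ++ rev (belast x1 wx1).
have := @cycle_from_walk G _ x1 y1 w Hg a1.
have e : eav x1 y1 y2 x2.
  rewrite /eav sadj_sym a2 /=; apply/negP => /orP[] /andP[/eqP e1 /eqP e2]; subst.
    by move: r1; rewrite ex ey eqxx.
  by move: ne; rewrite eqxx.
rewrite /w !cat_path (te_eav n1 n2 py1) ly1 ey -ly2 (te_eav_rev n1 n2 py2).
rewrite last_rev_belast /= e cat_path (te_eav n1 n2 px2) lx2 -ex -lx1 (te_eav_rev n1 n2 px1).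
rewrite !last_cat ly1 ey -ly2 last_rev_belast /= last_cat lx2 -ex -lx1 last_rev_belast.
rewrite !size_cat /= !size_cat !size_rev !size_belast => /(_ isT erefl).
by clear -sx1 sy1 sx2 sy2 dx1 dy1 dx2 dy2; lia.
Qed.

Variable x0 : T.
Hypothesis Hx0 : x0 \in V.

Definition HT := {c : T | c \in D}.
Definition S (u : HT) : {set T} := [set x in V | root x == val u].
Definition Hadj : rel HT := fun u v =>
  (u != v) && [exists x, exists y, [&& x \in S u, y \in S v & adj x y]].

Lemma Hsym : symmetric Hadj.
Proof.
move=> u v; rewrite /Hadj eq_sym; congr (_ && _).
apply/existsP/existsP => [[x /existsP [y /and3P[h1 h2 h3]]]|[x /existsP [y /and3P[h1 h2 h3]]]];
  by exists y; apply/existsP; exists x; rewrite h1 h2 sadj_sym h3.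
Qed.

Lemma Hirr : irreflexive Hadj.
Proof. by move=> u; rewrite /Hadj eqxx. Qed.

Definition H := SGraph Hsym Hirr.

Definition c0 : HT := Sub (root x0) (root_D Hx0).
Definition cell (x : T) : HT := insubd c0 (root x).

Lemma val_cell x : x \in V -> val (cell x) = root x.
Proof. by move=> xV; rewrite /cell val_insubd root_D. Qed.

Lemma half4 : (4 * R).+1./2 = 2 * R.
Proof.
have -> : (4 * R).+1 = true + (2 * R).*2 by rewrite -mul2n /=; clear; lia.
by rewrite half_bit_double.
Qed.

Lemma Hminor : shallow_minor (4 * R) G H.
Proof.
exists S, val, par; split.
- move=> u v uv; apply/disjP' => z; rewrite !inE => /andP[_ /eqP e1] /andP[_ /eqP e2].
  by move: uv; rewrite -(inj_eq val_inj) -e1 -e2 eqxx.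
- move=> u; rewrite inE (subsetP DV _ (valP u)) root_fix ?eqxx //; exact: valP.
- move=> u x; rewrite !inE => /andP[xV /eqP rx] nx.
  have hd : 0 < dd x.
    rewrite lt0n dd0 //; apply/negP => xD; move: nx; rewrite -rx root_fix //.
    by rewrite eqxx.
  have [h1 h2 _] := par_spec xV hd.
  by rewrite h1 root_par // rx eqxx sadj_sym h2.
- move=> u x; rewrite inE => /andP[_ /eqP rx]; exists (2 * R) => //.
  by rewrite half4.
- move=> u v /andP[_ /existsP [x /existsP [y /and3P[hx hy hxy]]]].
  exists x, y, (2 * R), (2 * R); split.
  + by rewrite hx hy hxy.
  + by move: hx; rewrite inE => /andP[_ /eqP].
  + by move: hy; rewrite inE => /andP[_ /eqP].
  + by clear; lia.
Qed.

Definition Pset := [set q : T * T | (q.1 \in V) && (q.2 \in [set y in V | adj q.1 y])].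
Definition Tset := [set q : T * T | te q.1 q.2 || te q.2 q.1].

Lemma countP : 2 * #|V| + #|Br| <= #|Pset|.
Proof.
rewrite /Pset (card_pairs V (fun x => [set y in V | adj x y])).
have -> : 2 * #|V| + #|Br| = \sum_(x in V) (2 + (x \in Br)).
  rewrite big_split /= sum_nat_const mulnC; congr (_ + _).
  rewrite -big_mkcondr /= -sum1_card; apply: eq_bigl => x.
  by rewrite /Br inE; case: (x \in V).
apply: leq_sum => x xV; have := Hdeg xV; rewrite /Br inE xV /=.
rewrite /deg_in; set k := #|_| => h; case: (ltnP 2 k) => /= h'; clear -h h'; lia.
Qed.

Lemma countT : #|Tset| <= 2 * (#|V| - #|D|).
Proof.
have -> : Tset = [set q | te q.1 q.2] :|: [set q | te q.2 q.1].
  by apply/setP => q; rewrite !inE.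
have hVD : #|V :\: D| = #|V| - #|D|.
  by rewrite cardsD; congr (_ - _); rewrite (setIidPr DV).
have B : forall (h : T * T -> T) (k : T * T -> T),
    {in [set q | te (h q) (k q)] &, injective h} ->
    #|[set q | te (h q) (k q)]| <= #|V :\: D|.
  move=> h k inj; rewrite -(card_in_imset inj); apply: subset_leq_card.
  apply/subsetP => y /imsetP [q]; rewrite inE => /and3P[aV ha _] ->.
  by rewrite inE aV andbT -dd0 // -lt0n ha.
have I1 := B fst snd _; have I2 := B snd fst _.
apply: leq_trans (leq_card_setU _ _) _.
rewrite mul2n -addnn -hVD leq_add ?I1 ?I2 //.
- by move=> [a b] [a' b']; rewrite !inE /= => /and3P[_ _ /eqP ->] /and3P[_ _ /eqP ->] /= ->.
- by move=> [a b] [a' b']; rewrite !inE /= => /and3P[_ _ /eqP ->] /and3P[_ _ /eqP ->] /= ->.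
Qed.

Lemma countNT : #|Br| + 2 * #|D| <= #|Pset :\: Tset|.
Proof.
have hP := countP; have hT := countT.
have hD : #|D| <= #|V| by apply: subset_leq_card DV.
have hI : #|Pset :&: Tset| <= #|Tset| by apply: subset_leq_card; apply: subsetIr.
rewrite cardsD; clear -hP hT hD hI; lia.
Qed.

Lemma NT_nt q : q \in Pset :\: Tset -> nt q.1 q.2.
Proof.
rewrite !inE => /andP[/norP[n1 n2] /andP[aV /andP[bV ab]]].
by rewrite /nt aV bV ab n1 n2.
Qed.

Lemma countOH : #|Pset :\: Tset| <= #|[set q : HT * HT | Hadj q.1 q.2]|.
Proof.
pose g := fun q : T * T => (cell q.1, cell q.2).
have inj : {in Pset :\: Tset &, injective g}.
  move=> q q' /NT_nt h /NT_nt h' [e1 e2].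
  have := nt_inj h h'; case/and5P: h => aV bV _ _ _; case/and5P: h' => aV' bV' _ _ _.
  rewrite -(val_cell aV) -(val_cell aV') -(val_cell bV) -(val_cell bV') e1 e2.
  by move=> /(_ erefl erefl); case: q q' {e1 e2 aV bV aV' bV'} => [? ?] [? ?].
rewrite -(card_in_imset inj); apply: subset_leq_card.
apply/subsetP => y /imsetP [q qin ->]; rewrite inE /=.
have := NT_nt qin; case/and5P => aV bV ab _ _.
rewrite /Hadj -(inj_eq val_inj) (val_cell aV) (val_cell bV) (nt_root (NT_nt qin)) /=.
apply/existsP; exists q.1; apply/existsP; exists q.2.
by rewrite !inE aV bV ab (val_cell aV) (val_cell bV) !eqxx.
Qed.

Lemma F_ball c a n : c \in V -> adj c a -> F c a n \subset ball V n.+1 [set c].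
Proof.
move=> cV ca; apply/subsetP => z /ballE [b [w [bX wk lw sw]]].
move: bX; rewrite inE => /eqP eb; subst b.
apply/ballE; exists c, (a :: w); split => //.
- by rewrite inE.
- have /andP[pw aw] := walk_in wk.
  by rewrite /walk /= ca pw cV.
Qed.

Lemma ball_count : 0 < R -> #|D| * 2 ^ ((R - 1) %/ p) <= #|Br| + #|D|.
Proof.
move=> R0.
pose Q := [set q : T * T | (q.1 \in D) && (q.2 \in Br :&: ball V R [set q.1])].
have hQ : #|Q| <= #|Br|.
  have inj : {in Q &, injective snd}.
    move=> [c z] [c' z']; rewrite !inE /= => /andP[cD /andP[_ z1]] /andP[cD' /andP[_ z2]] ez.
    subst z'; case: (eqVneq c c') => [->//|ne].
    have := Ddisj cD cD' ne; rewrite disjoints_subset => /subsetP/(_ z z1).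
    by rewrite inE => /negP H'; exfalso; apply: H'; exact: z2.
  rewrite -(card_in_imset inj); apply: subset_leq_card.
  by apply/subsetP => y /imsetP [q]; rewrite !inE => /andP[_ /andP[h _]] ->.
have cQ : #|Q| = \sum_(c in D) #|Br :&: ball V R [set c]|.
  exact: (card_pairs D (fun c => Br :&: ball V R [set c])).
suff : #|D| * 2 ^ ((R - 1) %/ p) <= #|Q| + #|D| by clear -hQ; lia.
rewrite cQ -sum_nat_const -[#|D|]sum1_card -big_split /=.
apply: leq_sum => c cD; have cV := subsetP DV c cD.
have : 0 < deg_in V c by have := Hdeg cV; clear; lia.
case/card_gt0P => a; rewrite inE => /andP[aV ca].
have := CL (leq_subr 1 R) (ear1 cV aV ca); rewrite /= addn0 => h.
apply: (leq_trans h); rewrite leq_add2r; apply: subset_leq_card; apply: setIS.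
by have := F_ball (R - 1) cV ca; rewrite subn1 prednK.
Qed.

Lemma dense : exists H : sgraph, [/\ shallow_minor (4 * R) G H, 0 < nverts H &
  nverts H * 2 ^ ((R - 1) %/ p) <= 2 * nedges H].
Proof.
exists H; split; first exact: Hminor.
- rewrite /nverts card_sig; apply/card_gt0P; exists (root x0); exact: root_D.
- have hnv : nverts H = #|D| by rewrite /nverts card_sig; apply: eq_card.
  have R0 : 0 < R by clear -Hp HpR; lia.
  have := ball_count R0; have := countNT; have := countOH; have := oriented_le H.
  rewrite hnv /= => h1 h2 h3 h4.
  have e : #|[set q : svert H * svert H | sadj q.1 q.2]| = #|[set q : HT * HT | Hadj q.1 q.2]|.
    by [].
  rewrite e in h1; apply: (leq_trans h4); apply: leq_trans h1; apply: leq_trans h2; apply: leq_trans _ h3.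
  by rewrite leq_add2l leq_pmull.
Qed.
End Core.
Unset Implicit Arguments.

Theorem mainTheorem1 (C : graph_class) :
  subexp_expansion C ->
  forall p : nat, 2 <= p ->
  exists g : nat, forall G : sgraph, C G -> girth_ge G g -> p_path_degenerate p G.
Proof.
move=> [_ Hq] p Hp.
have [K HK] := Hq (4 * p) (ltn_trans (isT : 0 < 3) (leq_trans (isT : 4 <= 4 * 2) (leq_mul (leqnn 4) Hp))).
pose m := maxn 3 K; pose R := p * m + 1.
exists (8 * R + 3) => G CG Hg.
suff main : forall n (V : {set svert G}), #|V| <= n -> p_reducible p V.
  exact: (main #|[set: svert G]|).
elim=> [|n IH] V hV.
  by move: hV; rewrite leqn0 cards_eq0 => /eqP ->; apply: pred_empty.
case: (set_0Vmem V) => [->|[x0 x0V]]; first exact: pred_empty.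
have dec : forall x, x \in V -> #|V :\ x| <= n.
  by move=> x xV; move: hV; rewrite (cardsD1 x V) xV.
case: (boolP [exists x in V, deg_in V x <= 1]).
  case/exists_inP => x xV dx.
  apply: (@pred_step _ _ _ (V :\ x)); last exact: IH (dec x xV).
  move: dx; rewrite leq_eqVlt ltnS leqn0 => /orP[/eqP d1|/eqP d0].
    exact: red_leaf.
  exact: red_isolated.
move=> /exists_inPn Hdeg'.
have Hdeg : forall x, x \in V -> 2 <= deg_in V x.
  by move=> x xV; have := Hdeg' x xV; rewrite leqNgt negbK.
case: (classic (exists x1 t, strict_ear V x1 t /\ p <= size t)).
  case=> x1 [t [se pt]].
  apply: (@pred_step _ _ _ (V :\: [set x | x \in interior x1 t])).
    exact: red_ear.
  apply: IH.
  have [a [aI aV]] : exists a, a \in interior x1 t /\ a \in V.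
    case/and5P: se pt => _ _ At _ _; case: t At => [|a [|b t']] At pt;
      try by (move: pt => /=; clear -Hp; lia).
    exists a; split; first by rewrite /interior /= inE eqxx.
    by case/and3P: At.
  apply: leq_trans (dec a aV); apply: subset_leq_card.
  by apply/subsetP => y; rewrite !inE => /andP[yI ->]; rewrite andbT; apply: contraNneq yI => ->.
move=> Nex.
have Hear : forall x1 t, strict_ear V x1 t -> size t < p.
  move=> x1 t se; rewrite ltnNge; apply/negP => pt; by apply: Nex; exists x1, t.
have m3 : 3 <= m by apply: leq_maxl.
have mK : K <= m by apply: leq_maxr.
have HpR : p <= R by rewrite /R; clear -m3 Hp; nia.
have [H [Hmin Hnv Hden]] := dense Hp HpR Hg Hdeg Hear x0V.
have hK : K <= 4 * R by rewrite /R; clear -m3 mK Hp; nia.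
have := HK (4 * R) hK G H CG Hmin Hnv.
have eR : (R - 1) %/ p = m by rewrite /R addnK mulKn //; clear -Hp; lia.
rewrite eR in Hden.
move: Hden; set d := nverts H; set e := nedges H => Hden.
move=> Hexp.
have h1 : (d * 2 ^ m) ^ (2 * (4 * p)) <= (2 * e) ^ (2 * (4 * p)).
  by rewrite leq_exp2r //; clear -Hp; lia.
rewrite !expnMn -!expnM in h1.
have h2 : d ^ (2 * (4 * p)) * 2 ^ (m * (2 * (4 * p))) <= d ^ (2 * (4 * p)) * 2 ^ (2 * (4 * p) + 4 * R).
  apply: (leq_trans h1); rewrite expnD [d ^ _ * _]mulnC -mulnA leq_mul2l.
  by rewrite Hexp orbT.
rewrite leq_mul2l expn_eq0 (negbTE (lt0n_neq0 Hnv)) /= leq_exp2l // in h2.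
exfalso; move: h2; rewrite /R; clear -Hp m3; nia.
Qed.
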